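(* Let $k>\ell\ge1$, $m\ge1$, $w=a^kba^\ell b^m$, and for $n\ge1$ let $S_n = a^kba^\ell a^{k}b a^{\ell}b^{m} (a^k b^{m+1}a^\ell)^n a^{k}b a^{\ell}b^{m} b^m$. For all integers $i,j\ge1$, $S_i\vdash^*_{\{w\}} S_j$ if and only if $i=j$.
   Context: For words $u,v$, the shuffle $u \sqcup\!\sqcup v$ is the set of all words $u_1v_1\cdots u_kv_k$ with $k\ge 1$, $u=u_1\cdots u_k$, $v=v_1\cdots v_k$ (pieces possibly empty). For a finite set $I$ of words, $v \vdash_I w$ means $w \in v \sqcup\!\sqcup u$ for some $u\in I$, and $\vdash_I^*$ is its reflexive-transitive closure. *)

(* Defs.v *)
From Stdlib Require Import Relations List.
From mathcomp Require Import all_boot.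
Set Implicit Arguments. Unset Strict Implicit. Unset Printing Implicit Defensive.

Inductive letter := la | lb.

Definition word := seq letter.

Definition pw (x : word) (n : nat) : word := flatten (nseq n x).

Fixpoint interleave (us vs : seq word) : word :=
  match us, vs with
  | u :: us', v :: vs' => u ++ v ++ interleave us' vs'
  | _, _ => [::]
  end.

(* w \in u ⧢ v : w = u_1 v_1 ... u_k v_k, k >= 1, u = u_1...u_k, v = v_1...v_k,
   pieces possibly empty. *)
Definition in_shuffle (w u v : word) : Prop :=
  exists (us vs : seq word),
    [/\ 1 <= size us, size us = size vs,
        flatten us = u, flatten vs = v & w = interleave us vs].

(* v |-_I w  :  w \in v ⧢ u for some u \in I (I a finite set of words, as a list) *)
Definition derives1 (I : seq word) (v w : word) : Prop :=
  exists u, List.In u I /\ in_shuffle w v u.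

Definition derives (I : seq word) : word -> word -> Prop :=
  clos_refl_trans word (derives1 I).

Definition wa (n : nat) : word := nseq n la.
Definition wb (n : nat) : word := nseq n lb.

Definition w_klm (k l m : nat) : word := wa k ++ [:: lb] ++ wa l ++ wb m.

Definition S_klm (k l m n : nat) : word :=
  wa k ++ [:: lb] ++ wa l ++ wa k ++ [:: lb] ++ wa l ++ wb m
  ++ pw (wa k ++ wb m.+1 ++ wa l) n
  ++ wa k ++ [:: lb] ++ wa l ++ wb m ++ wb m.

(* Main.v *)
From Stdlib Require Import Relations List ZArith Lia.
Require Import Defs.
From mathcomp Require Import all_boot zify.
Set Implicit Arguments. Unset Strict Implicit.

Fixpoint ilv {T : Type} (us vs : seq (seq T)) : seq T :=
  match us, vs with
  | u :: us', v :: vs' => u ++ v ++ ilv us' vs'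
  | _, _ => [::]
  end.

Lemma interleave_ilv us vs : interleave us vs = ilv us vs.
Proof. elim: us vs => [|u us IH] [|v vs] //=; by rewrite IH. Qed.

Definition splitP {T : Type} (us vs : seq (seq T)) x y :=
  exists us1 vs1 us2 vs2,
    [/\ size us1 = size vs1, size us2 = size vs2,
        x = ilv us1 vs1, y = ilv us2 vs2 &
        flatten us = flatten us1 ++ flatten us2 /\
        flatten vs = flatten vs1 ++ flatten vs2].

Lemma ilv_split {T : Type} (us vs : seq (seq T)) x y :
  size us = size vs -> ilv us vs = x ++ y -> splitP us vs x y.
Proof.
elim: us vs x y => [|u us IH] [|v vs] //= x y.
- move=> _ /esym/app_eq_nil [-> ->]. by exists [::], [::], [::], [::].
- move=> [Hs] E.
  have Ex : x = take (size x) (x ++ y) by rewrite take_size_cat.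
  have Ey : y = drop (size x) (x ++ y) by rewrite drop_size_cat.
  rewrite -E in Ex Ey.
  case: (ltnP (size x) (size u)) => H1.
  + exists [:: take (size x) u], [:: [::]], (drop (size x) u :: us), (v :: vs).
    rewrite /= !cats0 Hs; split => //.
    * by rewrite {1}Ex take_cat H1.
    * by rewrite {1}Ey drop_cat H1.
    * by rewrite catA cat_take_drop; split.
  case: (ltnP (size x - size u) (size v)) => H2.
  + exists [:: u], [:: take (size x - size u) v], ([::] :: us), (drop (size x - size u) v :: vs).
    rewrite /= !cats0 Hs; split => //.
    * rewrite {1}Ex take_cat ltnNge H1 /= take_cat H2 //.
    * rewrite {1}Ey drop_cat ltnNge H1 /= drop_cat H2 //.
    * by rewrite catA cat_take_drop; split.
  + have Ex' : x = u ++ v ++ take (size x - size u - size v) (ilv us vs).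
      by rewrite {1}Ex take_cat ltnNge H1 /= take_cat ltnNge H2.
    have Ey' : y = drop (size x - size u - size v) (ilv us vs).
      by rewrite {1}Ey drop_cat ltnNge H1 /= drop_cat ltnNge H2.
    have E' : ilv us vs = take (size x - size u - size v) (ilv us vs) ++ y
      by rewrite Ey' cat_take_drop.
    have [us1 [vs1 [us2 [vs2 [S1 S2 X1 Y1 [F1 F2]]]]]] := IH _ _ _ Hs E'.
    exists (u :: us1), (v :: vs1), us2, vs2; rewrite /= S1; split => //.
    * by rewrite Ex' X1.
    * by rewrite F1 F2 !catA.
Qed.

Fixpoint phi (Mz Cz : Z) (s : word) : Z :=
  match s with
  | [::] => 0%Z
  | la :: t => (Mz + phi Mz Cz t)%Z
  | lb :: t => (phi Mz Cz t - Cz)%Z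
  end.

Lemma phi_cat Mz Cz s t : phi Mz Cz (s ++ t) = (phi Mz Cz s + phi Mz Cz t)%Z.
Proof. elim: s => [|[] s IH] /=; lia. Qed.

Definition LT := (letter * bool)%type.
Definition fstw (z : seq LT) : word := map fst z.
Definition strand (z : seq LT) : word := map fst (filter snd z).

Lemma fstw_cat z1 z2 : fstw (z1 ++ z2) = fstw z1 ++ fstw z2.
Proof. by rewrite /fstw map_cat. Qed.
Lemma strand_cat z1 z2 : strand (z1 ++ z2) = strand z1 ++ strand z2.
Proof. by rewrite /strand filter_cat map_cat. Qed.

Lemma fstw_ilv (A B : seq (seq LT)) : fstw (ilv A B) = ilv (map fstw A) (map fstw B).
Proof. elim: A B => [|a A IH] [|b B] //=; by rewrite !fstw_cat IH. Qed.

Lemma fstw_flatten (A : seq (seq LT)) : fstw (flatten A) = flatten (map fstw A).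
Proof. elim: A => [|a A IH] //=; by rewrite fstw_cat IH. Qed.

Lemma phi_ilv Mz Cz (A B : seq (seq LT)) : size A = size B ->
  phi Mz Cz (fstw (ilv A B)) =
  (phi Mz Cz (fstw (flatten A)) + phi Mz Cz (fstw (flatten B)))%Z.
Proof.
elim: A B => [|a A IH] [|b B] //= [H].
rewrite !fstw_cat !phi_cat IH //; lia.
Qed.

Lemma strand_ilv (A B : seq (seq LT)) : size A = size B ->
  strand (flatten B) = [::] -> strand (ilv A B) = strand (flatten A).
Proof.
elim: A B => [|a A IH] [|b B] //= [H].
rewrite !strand_cat => /app_eq_nil [-> E].
by rewrite IH.
Qed.

Lemma ilv_nil {T : Type} (A B : seq (seq T)) : size A = size B ->
  flatten B = [::] -> ilv A B = flatten A.
Proof.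
elim: A B => [|a A IH] [|b B] //= [H] /app_eq_nil [-> E].
by rewrite IH.
Qed.

Definition Dw (w : word) x := derives [:: w] [::] x.

Definition wprefP Mz Cz (w : word) := forall w1 w2, w1 ++ w2 = w ->
   (0 <= phi Mz Cz w1)%Z /\ (phi Mz Cz w1 = 0%Z -> w1 = [::] \/ w2 = [::]).

Definition Inv (Mz Cz : Z) (w Si v : word) :=
  exists z : seq LT, [/\ fstw z = v, strand z = Si,
   (forall z1 z2, z = z1 ++ z2 -> (phi Mz Cz (strand z1) <= phi Mz Cz (fstw z1))%Z) &
   (forall z1 z2 z3, z = z1 ++ z2 ++ z3 -> phi Mz Cz (fstw z1) = phi Mz Cz (strand z1) ->
       phi Mz Cz (fstw z2) = 0%Z -> strand z2 = [::] -> Dw w (fstw z2))].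

Definition pf (s : word) : seq LT := map (fun x => (x, false)) s.

Lemma fstw_pf s : fstw (pf s) = s.
Proof. by elim: s => //= x s ->. Qed.
Lemma strand_pf s : strand (pf s) = [::].
Proof. by elim: s. Qed.

Lemma Inv_step Mz Cz w Si v v' : wprefP Mz Cz w ->
  derives1 [:: w] v v' -> Inv Mz Cz w Si v -> Inv Mz Cz w Si v'.
Proof.
move=> Hw [u [Hin [us [vs [Hsz Hsize Hfu Hfv Hv']]]]] [z [Hz1 Hz2 I1 I2]].
have Hu : u = w by case: Hin => // -[].
move: Hfv; rewrite Hu => Hfv.
set zs := reshape (shape us) z.
set ws := map pf vs.
have Ssz : size zs = size ws by rewrite /zs /ws size_reshape !size_map.
have Fz : flatten zs = z.
  apply: reshapeKr. by rewrite -(size_map fst) -/(fstw z) Hz1 -Hfu size_flatten.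
have Mz' : map fstw zs = us.
  by rewrite /zs /fstw map_reshape -/(fstw z) Hz1 -Hfu flattenK.
have Mw : map fstw ws = vs.
  rewrite /ws -map_comp (eq_map (g := id)) ?map_id // => s /=; exact: fstw_pf.
have Fw : flatten ws = pf w.
  by rewrite /ws /pf -Hfv map_flatten.
have SFw : strand (flatten ws) = [::] by rewrite Fw strand_pf.
have FFw : fstw (flatten ws) = w by rewrite Fw fstw_pf.
exists (ilv zs ws); split.
- by rewrite fstw_ilv Mz' Mw Hv' interleave_ilv.
- by rewrite strand_ilv // Fz.
- move=> z1 z2 E.
  have [A1 [B1 [A2 [B2 [S1 S2 X1 Y1 [F1 F2]]]]]] := ilv_split Ssz E.
  rewrite X1 (strand_ilv S1); last first.
    by move: SFw; rewrite F2 strand_cat => /app_eq_nil [].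
  rewrite phi_ilv //.
  have := I1 _ _ (etrans (esym Fz) F1).
  have [] := Hw (fstw (flatten B1)) (fstw (flatten B2)); first by rewrite -fstw_cat -F2.
  lia.
- move=> z1 z2 z3 E e1 e2 e3.
  have [A1 [B1 [RA [RB [S1 SR X1 Y1 [F1 F2]]]]]] := ilv_split Ssz E.
  have [A2 [B2 [A3 [B3 [S2 S3 X2 Y2 [G1 G2]]]]]] := ilv_split SR (esym Y1).
  rewrite G1 in F1; rewrite G2 in F2.
  have SB1 : strand (flatten B1) = [::].
    by move: SFw; rewrite F2 strand_cat => /app_eq_nil [].
  have SB2 : strand (flatten B2) = [::].
    by move: SFw; rewrite F2 !strand_cat => /app_eq_nil [_] /app_eq_nil [].
  have Ez : z = flatten A1 ++ flatten A2 ++ flatten A3 by rewrite -Fz F1.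
  have Ew : w = fstw (flatten B1) ++ fstw (flatten B2) ++ fstw (flatten B3)
    by rewrite -FFw F2 !fstw_cat.
  rewrite X1 (strand_ilv S1 SB1) phi_ilv // in e1.
  rewrite X2 phi_ilv // in e2.
  rewrite X2 (strand_ilv S2 SB2) in e3.
  have i1 := I1 _ _ Ez.
  have Ez' : z = (flatten A1 ++ flatten A2) ++ flatten A3 by rewrite -catA.
  have i12 := I1 _ _ Ez'.
  rewrite strand_cat e3 cats0 fstw_cat phi_cat in i12.
  have [w1 w1e] := Hw (fstw (flatten B1)) (fstw (flatten B2) ++ fstw (flatten B3)) (esym Ew).
  have Ew' : (fstw (flatten B1) ++ fstw (flatten B2)) ++ fstw (flatten B3) = w
    by rewrite -catA -Ew.
  have [w12 w12e] := Hw _ _ Ew'.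
  rewrite phi_cat in w12 w12e.
  have eA1 : phi Mz Cz (fstw (flatten A1)) = phi Mz Cz (strand (flatten A1)) by lia.
  have eB1 : phi Mz Cz (fstw (flatten B1)) = 0%Z by lia.
  have eA2 : phi Mz Cz (fstw (flatten A2)) = 0%Z by lia.
  have eB2 : (phi Mz Cz (fstw (flatten B1)) + phi Mz Cz (fstw (flatten B2)) = 0)%Z by lia.
  have DA2 := I2 _ _ _ Ez eA1 eA2 e3.
  have [W2nil | W2w] : fstw (flatten B2) = [::] \/
      (fstw (flatten B2) = w /\ fstw (flatten B1) = [::]).
    case: (w1e eB1) => [H1|/app_eq_nil [-> _]]; last by left.
    case: (w12e eB2) => [/app_eq_nil [_ ->]|H3]; first by left.
    right; split => //; by rewrite Ew H1 H3 cats0.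
  + rewrite X2 fstw_ilv ilv_nil; last first.
      by rewrite -fstw_flatten.
      by rewrite !size_map.
    by rewrite -fstw_flatten.
  + case: W2w => W2w _.
    case HA2: A2 => [|a A2'].
      by rewrite X2 HA2; apply: rt_refl.
    apply: rt_trans DA2 _; apply: rt_step.
    exists w; split; first by left.
    exists (map fstw A2), (map fstw B2); split.
    * by rewrite HA2.
    * by rewrite !size_map.
    * by rewrite -fstw_flatten.
    * by rewrite -fstw_flatten.
    * by rewrite X2 fstw_ilv interleave_ilv.
Qed.

Lemma Inv_derives Mz Cz w Si x y : wprefP Mz Cz w ->
  derives [:: w] x y -> Inv Mz Cz w Si x -> Inv Mz Cz w Si y.
Proof.
move=> Hw; elim => {x y} [x y H|x|x y z _ IH1 _ IH2].
- exact: Inv_step.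
- done.
- by move=> /IH1 /IH2.
Qed.

Definition pt (s : word) : seq LT := map (fun x => (x, true)) s.

Lemma all_pt s : all snd (pt s).
Proof. by elim: s. Qed.

Lemma Inv_init Mz Cz w Si : Inv Mz Cz w Si Si.
Proof.
exists (pt Si); split.
- by rewrite /fstw; elim: Si => //= x s ->.
- by rewrite /strand; elim: Si => //= x s ->.
- move=> z1 z2 E.
  have A : all snd z1.
    have := all_pt Si.
    by rewrite E all_cat => /andP [].
  suff -> : strand z1 = fstw z1 by lia.
  by rewrite /strand (all_filterP A).
- move=> z1 z2 z3 E _ _ S.
  have A : all snd z2.
    have := all_pt Si.
    by rewrite E !all_cat => /and3P [].
  have -> : z2 = [::].
    move: S; rewrite /strand (all_filterP A).
    by case: z2 {E A}.
  exact: rt_refl.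
Qed.

Definition isb (x : letter) : bool := if x is lb then true else false.

Fixpoint noba (s : word) : bool :=
  match s with
  | [::] => true
  | la :: t => noba t
  | lb :: t => all isb t
  end.

Lemma noba_all s : all isb s -> noba s.
Proof. by elim: s => //= -[] s IH //= /andP [_]. Qed.

Lemma noba_cat s t : noba (s ++ t) = [&& noba s, noba t & (has isb s ==> all isb t)].
Proof.
elim: s => [|[] s IH] /=.
- by case: (noba t).
- exact: IH.
- rewrite all_cat; case Hs: (all isb s) => /=.
  + by case Ht: (all isb t); rewrite ?andbF // noba_all.
  + by [].
Qed.

Lemma all_ilv (A B : seq word) : all isb (ilv A B) -> all isb (flatten (take (size A) B)).
Proof.
elim: A B => [|a A IH] [|b B] //= .
by rewrite !all_cat => /and3P [_ -> /IH].
Qed.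

Lemma noba_ilv (A B : seq word) : size A = size B -> noba (ilv A B) -> noba (flatten B).
Proof.
elim: A B => [|a A IH] [|b B] //= [H].
rewrite !noba_cat => /and3P [_ /and3P [Hb Hr Hi] _].
rewrite Hb (IH _ H Hr) /=.
apply/implyP => hb; move: (implyP Hi hb).
by move/all_ilv; rewrite H take_size.
Qed.

Lemma Dw_noba w x : ~~ noba w -> Dw w x -> x = [::] \/ ~~ noba x.
Proof.
move=> Hw Hd; have H := clos_rt_rtn1 _ _ _ _ Hd.
destruct H as [|y z Hyz _]; first by left.
move: Hyz => [u [Hin [us [vs [_ Hs _ Hfv ->]]]]].
right; apply/negP; rewrite interleave_ilv => /(noba_ilv Hs).
rewrite Hfv.
have -> : u = w by case: Hin => // -[].
by apply/negP.
Qed.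

Lemma strand_size z : size (strand z) <= size z.
Proof. by rewrite /strand size_map size_filter count_size. Qed.

Lemma take_seg {T : Type} (z : seq T) p1 p2 : p1 <= p2 ->
  take p2 z = take p1 z ++ drop p1 (take p2 z).
Proof. by move=> H; rewrite -{1}(cat_take_drop p1 (take p2 z)) take_takel. Qed.

Lemma Inv_facts Mz Cz w Si Sj : Inv Mz Cz w Si Sj ->
  exists q : nat -> nat,
  [/\ q 0 = 0, (forall p, (phi Mz Cz (take (q p) Si) <= phi Mz Cz (take p Sj))%Z),
      (forall p1 p2, p1 <= p2 -> q p1 <= q p2 <= q p1 + (p2 - p1)),
      (forall p, p <= size Sj -> size Si <= q p + (size Sj - p)) &
      (forall p1 p2, p1 <= p2 -> q p1 = q p2 ->
         phi Mz Cz (take p1 Sj) = phi Mz Cz (take (q p1) Si) ->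
         phi Mz Cz (take p2 Sj) = phi Mz Cz (take p1 Sj) ->
         Dw w (drop p1 (take p2 Sj)))].
Proof.
move=> [z [Hz1 Hz2 I1 I2]].
have St : forall p, strand (take p z) = take (size (strand (take p z))) Si.
  move=> p; by rewrite -Hz2 -{3}(cat_take_drop p z) strand_cat take_size_cat.
have Ft : forall p, fstw (take p z) = take p Sj by move=> p; rewrite -Hz1 /fstw map_take.
exists (fun p => size (strand (take p z))); split.
- by rewrite take0.
- move=> p; rewrite -St -Ft; apply: (I1 _ (drop p z)); by rewrite cat_take_drop.
- move=> p1 p2 H; rewrite (take_seg z H) strand_cat size_cat leq_addr /=.
  rewrite leq_add2l; apply: (leq_trans (strand_size _)).
  by rewrite size_drop size_take_min; apply: leq_sub2r; apply: geq_minl.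
- move=> p Hp.
  have : size (strand z) = size (strand (take p z)) + size (strand (drop p z)).
    by rewrite -size_cat -strand_cat cat_take_drop.
  rewrite Hz2 => ->; rewrite leq_add2l; apply: (leq_trans (strand_size _)).
  by rewrite size_drop -Hz1 /fstw size_map.
- move=> p1 p2 H Eq E1 E2.
  set seg := drop p1 (take p2 z).
  have Ez : z = take p1 z ++ seg ++ drop p2 z.
    by rewrite catA -take_seg // cat_take_drop.
  have Sseg : strand seg = [::].
    have : size (strand (take p2 z)) = size (strand (take p1 z)) + size (strand seg).
      by rewrite (take_seg z H) strand_cat size_cat.
    rewrite -Eq => /eqP; rewrite -{1}(addn0 (size _)) eqn_add2l eq_sym => /eqP.
    by move/size0nil.
  have Fseg : fstw seg = drop p1 (take p2 Sj).
    by rewrite /seg /fstw map_drop map_take -/(fstw z) Hz1.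
  rewrite -Fseg; apply: (I2 _ _ _ Ez).
  + by rewrite Ft E1 -St.
  + have := congr1 (phi Mz Cz) (Ft p2).
    rewrite (take_seg z H) fstw_cat phi_cat Ft E2 -/seg; lia.
  + exact: Sseg.
Qed.

Lemma phi_nseq_a Mz Cz n : phi Mz Cz (nseq n la) = (Z.of_nat n * Mz)%Z.
Proof. elim: n => [|n IH]; rewrite ?Nat2Z.inj_succ /= ?IH; lia. Qed.
Lemma phi_nseq_b Mz Cz n : phi Mz Cz (nseq n lb) = (- Z.of_nat n * Cz)%Z.
Proof. elim: n => [|n IH]; rewrite ?Nat2Z.inj_succ /= ?IH; lia. Qed.

Lemma phi_take_cat Mz Cz s u t : phi Mz Cz (take s (u ++ t)) =
  if s <= size u then phi Mz Cz (take s u)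
  else (phi Mz Cz u + phi Mz Cz (take (s - size u) t))%Z.
Proof.
rewrite take_cat; case: (ltnP s (size u)) => H.
- by rewrite ltnW.
- case: (eqVneq s (size u)) => [->|ne].
    by rewrite leqnn subnn take0 cats0 take_size.
  by rewrite leqNgt ltn_neqAle eq_sym ne H /= phi_cat.
Qed.

Lemma take_nseq' {T : Type} s n (x : T) : take s (nseq n x) = nseq (minn s n) x.
Proof. elim: n s => [|n IH] [|s] //=; rewrite ?minn0 ?min0n ?IH ?minnSS //. Qed.

Definition Xw k l m := wa k ++ wb m.+1 ++ wa l.
Definition pre k l m := wa k ++ [:: lb] ++ wa l ++ wa k ++ [:: lb] ++ wa l ++ wb m.
Definition suf k l m := wa k ++ [:: lb] ++ wa l ++ wb m ++ wb m.

Lemma S_dec k l m n : S_klm k l m n = pre k l m ++ pw (Xw k l m) n ++ suf k l m.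
Proof. by rewrite /S_klm /pre /suf /Xw -!catA. Qed.

Lemma pw_add (X : word) x y : pw X (x + y) = pw X x ++ pw X y.
Proof. by rewrite /pw nseqD flatten_cat. Qed.

Lemma size_pw (X : word) n : size (pw X n) = n * size X.
Proof. elim: n => [|n IH] //=. by rewrite /pw /= size_cat -/(pw X n) IH mulSn. Qed.

Lemma phi_pw Mz Cz X n : phi Mz Cz X = 0%Z -> phi Mz Cz (pw X n) = 0%Z.
Proof. move=> H; elim: n => //= n IH. by rewrite /pw /= phi_cat -/(pw X n) IH H. Qed.

Definition MZ (m : nat) := (Z.of_nat m + 1)%Z.
Definition CZ (k l : nat) := (Z.of_nat k + Z.of_nat l)%Z.

Lemma phi_take_nseq Mz Cz s n x : phi Mz Cz (take s (nseq n x)) =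
  if x is la then (Z.of_nat (minn s n) * Mz)%Z else (- Z.of_nat (minn s n) * Cz)%Z.
Proof. by rewrite take_nseq'; case: x; rewrite ?phi_nseq_a ?phi_nseq_b. Qed.

Lemma w_pref_arith k l m s : l < k -> 1 <= l -> 1 <= m -> s <= k + 1 + l + m ->
  let v := phi (MZ m) (CZ k l) (take s (w_klm k l m)) in
  (0 <= v)%Z /\ (v = 0%Z -> s = 0 \/ s = k + 1 + l + m).
Proof.
move=> Hkl Hl Hm Hs /=.
rewrite /w_klm /wa /wb (_ : [:: lb] = nseq 1 lb) //.
rewrite !phi_take_cat !size_nseq !phi_take_nseq ?phi_cat !phi_nseq_a !phi_nseq_b /MZ /CZ.
repeat case: ifP => ?; split; try nia.
Qed.

Lemma w_pref k l m : l < k -> 1 <= l -> 1 <= m -> wprefP (MZ m) (CZ k l) (w_klm k l m).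
Proof.
move=> Hkl Hl Hm w1 w2 E.
have Hs : w1 = take (size w1) (w_klm k l m) by rewrite -E take_size_cat.
have Sw : size (w_klm k l m) = k + 1 + l + m by rewrite /w_klm !size_cat !size_nseq /=; lia.
have Hs2 : size w2 = size (w_klm k l m) - size w1 by rewrite -E size_cat addKn.
have Hle : size w1 <= k + 1 + l + m by rewrite -Sw -E size_cat leq_addr.
have [H1 H2] := w_pref_arith Hkl Hl Hm Hle.
rewrite {1 2}Hs; split => // /H2 [] H.
- by left; apply: size0nil.
- by right; apply: size0nil; rewrite Hs2 Sw H subnn.
Qed.

Definition Lw k l m := k + l + m + 1.

Lemma X_arith k l m s : l < k -> 1 <= l -> 1 <= m -> s <= Lw k l m ->
  (phi (MZ m) (CZ k l) (take s (Xw k l m)) <= - (MZ m * Z.of_nat l))%Z ->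
  s = k + m.+1.
Proof.
move=> Hkl Hl Hm Hs.
rewrite /Xw /wa /wb /Lw in Hs *.
rewrite !phi_take_cat !size_nseq !phi_take_nseq ?phi_cat !phi_nseq_a !phi_nseq_b /MZ /CZ.
repeat case: ifP => ?; nia.
Qed.

Lemma phi_X k l m : phi (MZ m) (CZ k l) (Xw k l m) = 0%Z.
Proof. rewrite /Xw !phi_cat !phi_nseq_a !phi_nseq_b /MZ /CZ; lia. Qed.

Lemma size_X k l m : size (Xw k l m) = Lw k l m.
Proof. rewrite /Xw /Lw !size_cat !size_nseq; lia. Qed.

Lemma PW k l m t B : l < k -> 1 <= l -> 1 <= m ->
  (forall s', s' <= B -> (0 <= phi (MZ m) (CZ k l) (take s' t))%Z) ->
  (- (MZ m * Z.of_nat l) < 0)%Z ->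
  forall n s, s <= n * Lw k l m + B ->
  (phi (MZ m) (CZ k l) (take s (pw (Xw k l m) n ++ t)) <= - (MZ m * Z.of_nat l))%Z ->
  exists x, x < n /\ s = x * Lw k l m + (k + m.+1).
Proof.
move=> Hkl Hl Hm Ht Hneg; elim => [|n IH] s Hs.
- move=> H; have := Ht s Hs; rewrite /pw /= in H; lia.
- rewrite /pw /= -/(pw _ n) -catA phi_take_cat size_X.
  case: ifP => H1 H2.
  + exists 0; split => //; rewrite mul0n add0n; exact: X_arith H1 H2.
  + rewrite phi_X Z.add_0_l in H2.
    move: H1 => /negbT; rewrite -ltnNge => H1.
    rewrite mulSn in Hs.
    have Hs' : s - Lw k l m <= n * Lw k l m + B.
      set NL := n * Lw k l m in Hs *; set L := Lw k l m in Hs H1 *; lia.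
    have [x [Hx Ex]] := IH _ Hs' H2.
    exists x.+1; split; first by [].
    rewrite mulSn; set XL := x * Lw k l m in Ex *; set L := Lw k l m in Ex H1 *; lia.
Qed.

Definition Ar k l m r := pre k l m ++ pw (Xw k l m) r.-1 ++ wa k ++ wb m.+1.

Lemma pw_S (X : word) n : pw X n.+1 = X ++ pw X n.
Proof. by []. Qed.

Lemma size_pre k l m : size (pre k l m) = k + 1 + Lw k l m + l.
Proof. rewrite /pre /Lw !size_cat !size_nseq /=; lia. Qed.

Lemma S_size k l m n : size (S_klm k l m n) = (n + 3) * Lw k l m.
Proof.
rewrite S_dec size_cat size_pre size_cat size_pw size_X /suf !size_cat !size_nseq /=.
rewrite mulnDl; set NL := n * Lw k l m; rewrite /Lw; lia.
Qed.

Lemma S_Ar k l m n r : 1 <= r <= n ->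
  S_klm k l m n = Ar k l m r ++ (wa l ++ pw (Xw k l m) (n - r) ++ suf k l m).
Proof.
move=> /andP [H1 H2].
have E : n = r.-1 + (n - r).+1 by lia.
by rewrite S_dec {1}E pw_add pw_S /Ar /Xw /pre -!catA.
Qed.

Lemma size_Ar k l m r : 1 <= r -> size (Ar k l m r) = k + 1 + (r + 1) * Lw k l m.
Proof.
move=> H; rewrite /Ar size_cat size_pre !size_cat size_pw size_X !size_nseq.
have E : r = r.-1.+1 by lia.
have HR : r * Lw k l m = Lw k l m + r.-1 * Lw k l m by rewrite {1}E mulSn.
rewrite mulnDl mul1n HR; set RL := r.-1 * Lw k l m; rewrite /Lw; lia.
Qed.

Lemma phi_pre k l m : phi (MZ m) (CZ k l) (pre k l m) = (Z.of_nat m * CZ k l)%Z.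
Proof. rewrite /pre !phi_cat !phi_nseq_a !phi_nseq_b /= /MZ /CZ; lia. Qed.

Lemma phi_Ar k l m r :
  phi (MZ m) (CZ k l) (Ar k l m r) = (Z.of_nat k * MZ m - CZ k l)%Z.
Proof.
rewrite /Ar phi_cat phi_pre !phi_cat phi_pw ?phi_X // phi_nseq_a phi_nseq_b /MZ /CZ; lia.
Qed.

Lemma Ar_S k l m r : 1 <= r ->
  Ar k l m r.+1 = Ar k l m r ++ (wa l ++ wa k ++ wb m.+1).
Proof.
move=> H; have E : r = r.-1.+1 by lia.
have P1 : pw (Xw k l m) 1 = Xw k l m by rewrite /pw; exact: cats0.
by rewrite /Ar /= {1}E -addn1 pw_add P1 /Xw -!catA.
Qed.

Lemma pre_arith k l m q : l < k -> 1 <= l -> 1 <= m -> k + 1 < q -> q <= size (pre k l m) ->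
  (Z.of_nat k * MZ m - CZ k l < phi (MZ m) (CZ k l) (take q (pre k l m)))%Z.
Proof.
move=> Hkl Hl Hm Hq1 Hq2.
rewrite size_pre /Lw in Hq2.
rewrite /pre (_ : [:: lb] = nseq 1 lb) //.
rewrite !phi_take_cat !size_nseq !phi_take_nseq ?phi_cat !phi_nseq_a !phi_nseq_b /MZ /CZ.
repeat case: ifP => ?; nia.
Qed.

Lemma suf_w k l m : suf k l m = w_klm k l m ++ wb m.
Proof. by rewrite /suf /w_klm -!catA. Qed.

Lemma S4 k l m i q : l < k -> 1 <= l -> 1 <= m -> 1 <= i ->
  k + 1 < q -> q <= k + 1 + (i + 2) * Lw k l m ->
  (phi (MZ m) (CZ k l) (take q (S_klm k l m i)) <= Z.of_nat k * MZ m - CZ k l)%Z ->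
  exists x, 1 <= x <= i /\ q = k + 1 + (x + 1) * Lw k l m.
Proof.
move=> Hkl Hl Hm Hi Hq1 Hq2.
rewrite S_dec phi_take_cat; case: ifP => H.
- move=> H'; have := pre_arith Hkl Hl Hm Hq1 H; lia.
- rewrite phi_pre size_pre => H2.
  have H3 : (phi (MZ m) (CZ k l) (take (q - (k + 1 + Lw k l m + l))
              (pw (Xw k l m) i ++ suf k l m)) <= - (MZ m * Z.of_nat l))%Z.
    move: H2; rewrite /MZ /CZ; lia.
  have Ht : forall s', s' <= Lw k l m - l ->
      (0 <= phi (MZ m) (CZ k l) (take s' (suf k l m)))%Z.
    move=> s' Hs'; rewrite suf_w takel_cat; last first.
      rewrite /w_klm !size_cat !size_nseq /=; move: Hs'; rewrite /Lw; lia.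
    have [] := @w_pref_arith k l m s' Hkl Hl Hm; last by [].
    move: Hs'; rewrite /Lw; lia.
  have Hneg : (- (MZ m * Z.of_nat l) < 0)%Z by rewrite /MZ; nia.
  have Hs : q - (k + 1 + Lw k l m + l) <= i * Lw k l m + (Lw k l m - l).
    move: Hq2; rewrite size_pre in H; move: H.
    rewrite !mulnDl; set IL := i * Lw k l m; rewrite /Lw; lia.
  have [x [Hx Ex]] := PW Hkl Hl Hm Ht Hneg Hs H3.
  exists x.+1; split; first by lia.
  move: H Ex; rewrite size_pre !mulnDl mulSn; set XL := x * Lw k l m; rewrite /Lw; lia.
Qed.

Lemma noba_nseq_a n t : noba (nseq n la ++ t) = noba t.
Proof. by elim: n. Qed.

Lemma noba_w k l m : 1 <= l -> ~~ noba (w_klm k l m).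
Proof.
move=> Hl; rewrite /w_klm /wa noba_nseq_a /=.
by case: l Hl.
Qed.

Lemma noba_seg k l m : noba (wa l ++ wa k ++ wb m.+1).
Proof.
rewrite /wa catA -nseqD noba_nseq_a; apply: noba_all.
by elim: m.+1.
Qed.

Lemma take_Ar k l m n r : 1 <= r <= n ->
  take (k + 1 + (r + 1) * Lw k l m) (S_klm k l m n) = Ar k l m r.
Proof.
move=> /andP [H1 H2]; rewrite (S_Ar k l m (n:=n) (r:=r)) ?H1 ?H2 //.
by rewrite take_size_cat // size_Ar.
Qed.

Theorem lemma7 (k l m : nat) :
  l < k -> 1 <= l -> 1 <= m ->
  forall i j : nat, 1 <= i -> 1 <= j ->
    (derives [:: w_klm k l m] (S_klm k l m i) (S_klm k l m j) <-> i = j).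
Proof.
move=> Hkl Hl Hm i j Hi Hj; split; last by move=> ->; apply: rt_refl.
move=> D.
have Hw := w_pref Hkl Hl Hm.
have IJ := Inv_derives Hw D (Inv_init (MZ m) (CZ k l) (w_klm k l m) (S_klm k l m i)).
have [q [Q0 Q1 Q2 Q3 Q4]] := Inv_facts IJ.
set L := Lw k l m.
have HL : 0 < L by rewrite /L /Lw; lia.
have HLk : k + 1 < L by rewrite /L /Lw; lia.
have SzI := S_size k l m i; have SzJ := S_size k l m j; rewrite -/L in SzI SzJ.
have Hij : i <= j.
  have := Q3 _ (leqnn _); rewrite subnn addn0 => H.
  have := Q2 0 (size (S_klm k l m j)) (leq0n _); rewrite Q0 add0n subn0 => /andP [_ H'].
  have : (i + 3) * L <= (j + 3) * L by rewrite -SzI -SzJ; exact: leq_trans H H'.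
  by rewrite leq_pmul2r // leq_add2r.
case: (ltngtP i j) => [Hlt|Hgt|//]; last by move: Hij; rewrite leqNgt Hgt.
exfalso.
set T := (Z.of_nat k * MZ m - CZ k l)%Z.
set P := fun r => k + 1 + (r + 1) * L.
have PhiJ : forall r, 1 <= r <= j -> phi (MZ m) (CZ k l) (take (P r) (S_klm k l m j)) = T.
  by move=> r Hr; rewrite /P /L take_Ar // phi_Ar.
have PhiI : forall x, 1 <= x <= i -> phi (MZ m) (CZ k l) (take (P x) (S_klm k l m i)) = T.
  by move=> x Hx; rewrite /P /L take_Ar // phi_Ar.
have LeT : forall r, 1 <= r <= j ->
    (phi (MZ m) (CZ k l) (take (q (P r)) (S_klm k l m i)) <= T)%Z.
  by move=> r Hr; rewrite -(PhiJ r Hr); apply: Q1.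
have PS : forall r, P r.+1 = P r + L.
  by move=> r; rewrite /P !mulnDl mulSn; lia.
have U : forall r, 1 <= r <= j -> q (P r) <= k + 1 + (i + 2) * L.
  elim => [|r IH] //= Hr.
  case: (posnP r) => [r0|rpos].
  - subst r; have := Q2 0 (P 1) (leq0n _); rewrite Q0 add0n subn0 => /andP [_ H].
    apply: (leq_trans H); rewrite /P leq_add2l leq_pmul2r //; lia.
  - have Hr' : 1 <= r <= j by lia.
    have := Q2 (P r) (P r.+1); rewrite PS leq_addr => /(_ isT) /andP [_ H].
    rewrite addKn in H; apply: (leq_trans H).
    case: (leqP (q (P r)) (k + 1)) => Hq.
    + rewrite !mulnDl; set IL := i * L; lia.
    + have [x [Hx ->]] := S4 Hkl Hl Hm Hi Hq (IH Hr') (LeT r Hr').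
      have XI : x * L <= i * L by rewrite leq_pmul2r //; lia.
      rewrite !mulnDl; lia.
have Low : forall r, 1 <= r <= j -> P r - (j - i) * L <= q (P r).
  move=> r Hr.
  have RJ : r * L <= j * L by rewrite leq_pmul2r //; lia.
  have IJL : i * L <= j * L by rewrite leq_pmul2r //; lia.
  have HP : P r <= size (S_klm k l m j).
    by rewrite SzJ /P !mulnDl; lia.
  have := Q3 _ HP; rewrite SzI SzJ.
  move: HP; rewrite SzJ /P !mulnDl mulnBl; lia.
set r0 := j - i.
have V : forall s, r0 + s <= j ->
    k + 1 + (s + 2) * L <= q (P (r0 + s)).
  elim => [|s IH] Hs.
  - rewrite addn0 in Hs *.
    have Hr : 1 <= r0 <= j by rewrite /r0; lia.
    have Hlo := Low _ Hr.
    have Hq : k + 1 < q (P r0).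
      apply: leq_trans Hlo; rewrite /P /r0 !mulnDl; nia.
    have [x [Hx ->]] := S4 Hkl Hl Hm Hi Hq (U _ Hr) (LeT _ Hr).
    rewrite leq_add2l leq_pmul2r //; lia.
  - have Hr : 1 <= r0 + s <= j by rewrite /r0; lia.
    have Hr1 : 1 <= r0 + s.+1 <= j by rewrite /r0; lia.
    have Hs' : r0 + s <= j by lia.
    have IH' := IH Hs'.
    have [x [Hx Ex]] : exists x, 1 <= x <= i /\ q (P (r0 + s)) = P x.
      have Hq : k + 1 < q (P (r0 + s)).
        apply: leq_trans IH'; rewrite -{1}[k + 1]addn0 ltn_add2l muln_gt0 HL andbT addn2 //.
      exact: S4 Hkl Hl Hm Hi Hq (U _ Hr) (LeT _ Hr).
    have Hle0 : P (r0 + s) <= P (r0 + s.+1) by rewrite addnS PS leq_addr.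
    move: (Q2 _ _ Hle0) => /andP [Hm1 _].
    have Hq1 : k + 1 < q (P (r0 + s.+1)).
      apply: leq_trans Hm1; apply: leq_trans IH'; rewrite -{1}[k + 1]addn0 ltn_add2l muln_gt0 HL andbT addn2 //.
    have [y [Hy Ey]] := S4 Hkl Hl Hm Hi Hq1 (U _ Hr1) (LeT _ Hr1).
    case: (ltngtP x y) => Hxy.
    + rewrite Ey; rewrite Ex in IH'.
      rewrite leq_add2l leq_pmul2r //.
      move: IH'; rewrite /P leq_add2l leq_pmul2r //; lia.
    + move: Hm1; rewrite Ex Ey /P leq_add2l leq_pmul2r //; lia.
    +
      have Eq : q (P (r0 + s)) = q (P (r0 + s).+1) by rewrite -addnS Ey Ex Hxy.
      have Hle : P (r0 + s) <= P (r0 + s).+1 by rewrite PS leq_addr.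
      have E1 : phi (MZ m) (CZ k l) (take (P (r0 + s)) (S_klm k l m j)) =
                phi (MZ m) (CZ k l) (take (q (P (r0 + s))) (S_klm k l m i)).
        by rewrite PhiJ // Ex PhiI.
      have E2 : phi (MZ m) (CZ k l) (take (P (r0 + s).+1) (S_klm k l m j)) =
                phi (MZ m) (CZ k l) (take (P (r0 + s)) (S_klm k l m j)).
        by rewrite -addnS !PhiJ.
      have Dseg := Q4 _ _ Hle Eq E1 E2.
      have Eseg : drop (P (r0 + s)) (take (P (r0 + s).+1) (S_klm k l m j)) =
                  wa l ++ wa k ++ wb m.+1.
        rewrite /P take_Ar; last by rewrite -addnS.
        rewrite Ar_S; last by lia.
        rewrite drop_size_cat // size_Ar //; lia.
      rewrite Eseg in Dseg.
      exfalso; case: (Dw_noba (@noba_w k l m Hl) Dseg) => [|H]; last by rewrite noba_seg in H.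
      move=> /(congr1 size); rewrite !size_cat !size_nseq /=; lia.
  have Hjr : r0 + (j - r0) = j by rewrite /r0; lia.
  have Hfin := V (j - r0) (eq_leq Hjr).
  rewrite Hjr in Hfin.
  have Hr : 1 <= j <= j by rewrite Hj leqnn.
  have Hq : k + 1 < q (P j).
    apply: leq_trans Hfin; rewrite -{1}[k + 1]addn0 ltn_add2l muln_gt0 HL andbT addn2 //.
  have [x [Hx Ex]] := S4 Hkl Hl Hm Hi Hq (U _ Hr) (LeT _ Hr).
  move: Hfin; rewrite Ex /r0 (_ : j - (j - i) = i); last by lia.
  rewrite leq_add2l leq_pmul2r //; lia.
Qed.
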